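(* Let $x_1,\dots,x_n\ge0$ be real numbers and $P_n(z)=(z-x_1)\cdots(z-x_n)$. Then $d_1\big(Z(P_n),Z(P_n')\cup\{0\}\big)=\frac1n\sum_{i=1}^n x_i$.
   Context: For a polynomial $P$, $Z(P)$ is the multiset of its zeros (with multiplicity); $Z(P_n')\cup\{0\}$ denotes the multiset of the $n-1$ critical points of $P_n$ together with one additional point $0$. For multisets $U=\{u_1,\dots,u_n\}$, $V=\{v_1,\dots,v_n\}$, $d_1(U,V)=\min_{\pi\in\mathfrak{S}_n}\sum_{i=1}^n|u_i-v_{\pi(i)}|$. *)

(* Defs.v *)
From HB Require Import structures.
From mathcomp Require Import all_boot all_order all_algebra.
Set Implicit Arguments. Unset Strict Implicit. Unset Printing Implicit Defensive.
Import Order.TTheory GRing.Theory Num.Theory.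
Local Open Scope ring_scope.

Definition match_cost (R : numDomainType) (U V : seq R) : R :=
  \sum_(i < size U) `|U`_i - V`_i|.

(* d_1(U,V) = min over all permutations (orderings) s of V of
   sum_i |u_i - s_i|.  [permutations V] lists all reorderings of V; V itself
   is the starting value of the min (it is also in the list). *)
Definition d1 (R : realDomainType) (U V : seq R) : R :=
  foldr Num.min (match_cost U V) [seq match_cost U s | s <- permutations V].

Definition zeros_multiset (R : idomainType) (p : {poly R}) (s : seq R) : Prop :=
  p != 0 /\ p = lead_coef p *: \prod_(y <- s) ('X - y%:P).

(* Main.v *)
Require Import Defs.
From HB Require Import structures.
From mathcomp Require Import all_boot all_order all_algebra.
From mathcomp Require Import polyorder polyrcf.
From mathcomp Require Import zify ring lra.
Import Order.TTheory GRing.Theory Num.Theory.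
Local Open Scope ring_scope.

Section Aux.
Variable R : rcfType.
Implicit Types (s xs ys : seq R).

Lemma count_le3 (P1 P2 P3 Q : pred R) s :
  {in s, forall z, (P1 z + P2 z + P3 z <= Q z)%N} ->
  (count P1 s + count P2 s + count P3 s <= count Q s)%N.
Proof.
elim: s => //= z s IH H.
have H1 := H z (mem_head _ _).
have H2 : (count P1 s + count P2 s + count P3 s <= count Q s)%N.
  by apply: IH => w hw; apply: H; rewrite in_cons hw orbT.
lia.
Qed.

Lemma count_eq2 (P1 P2 Q : pred R) s :
  {in s, forall z, (Q z : nat) = (P1 z + P2 z)%N} ->
  (count Q s = count P1 s + count P2 s)%N.
Proof.
elim: s => //= z s IH H.
have H1 := H z (mem_head _ _).
have H2 : (count Q s = count P1 s + count P2 s)%N.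
  by apply: IH => w hw; apply: H; rewrite in_cons hw orbT.
lia.
Qed.

Lemma count_sub (P Q : pred R) s :
  {in s, forall z, P z -> Q z} -> (count P s <= count Q s)%N.
Proof.
move=> H; have := @count_le3 P pred0 pred0 Q s; rewrite !count_pred0 !addn0.
apply=> z zs /=; rewrite !addn0; case: (boolP (P z)) => // /(H z zs) ->.
by [].
Qed.

Lemma max_in (z : R) s : exists2 m, m \in z :: s & forall w, w \in z :: s -> w <= m.
Proof.
elim: s z => [|y s IH] z.
  by exists z; rewrite ?mem_head // => w; rewrite inE => /eqP->.
have [m ms Hm] := IH y.
have [zm|mz] := leP z m.
  exists m; first by rewrite in_cons ms orbT.
  move=> w; rewrite in_cons => /orP[/eqP->//|]; exact: Hm.
exists z; first exact: mem_head.
move=> w; rewrite in_cons => /orP[/eqP->//|/Hm wm]; exact: le_trans wm (ltW mz).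
Qed.

Lemma max_filter (P : pred R) s : has P s ->
  exists m, [/\ m \in s, P m & forall w, w \in s -> P w -> w <= m].
Proof.
move=> hP; case E: (filter P s) => [|z t].
  by move: hP; rewrite has_filter E.
have [m mf Hm] := max_in z t; rewrite -E mem_filter in mf.
case/andP: mf => Pm ms; exists m; split=> // w ws Pw; apply: Hm.
by rewrite -E mem_filter Pw ws.
Qed.

Lemma foldr_min_ge (L i : R) l : L <= i -> all (fun y => L <= y) l ->
  L <= foldr Num.min i l.
Proof.
elim: l => //= y l IH Li /andP[Ly Hl]; rewrite le_min Ly /=; exact: IH.
Qed.

Lemma foldr_min_le (i y : R) l : y \in l -> foldr Num.min i l <= y.
Proof.
elim: l => //= z l IH; rewrite in_cons => /orP[/eqP->|/IH h].
  by rewrite ge_min lexx.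
by rewrite ge_min h orbT.
Qed.

Lemma sum_nth s : \sum_(i < size s) s`_i = \sum_(y <- s) y.
Proof. by rewrite (big_nth 0) big_mkord. Qed.

End Aux.

Section Greedy.
Variable R : rcfType.

Lemma greedy (U V : seq R) : size U = size V ->
  (forall t : R, (count (fun z : R => (z <= t)%R) U <= count (fun z : R => (z <= t)%R) V)%N) ->
  exists s, perm_eq s V /\ forall i, (i < size U)%N -> s`_i <= U`_i.
Proof.
elim: U V => [|u U IH] V /=.
  by case: V => // _ _; exists [::].
move=> hs H.
have hv : has (fun z : R => (z <= u)%R) V.
  by rewrite has_count; have := H u; rewrite lexx /=; lia.
have [v [vV vu vmax]] := @max_filter R _ _ hv.
have pV := perm_to_rem vV.
have cV t : count (fun z : R => (z <= t)%R) V = ((v <= t)%R + count (fun z : R => (z <= t)%R) (rem v V))%N.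
  by rewrite (permP pV).
have [s' [ps' Hs']] : exists s, perm_eq s (rem v V) /\
     forall i, (i < size U)%N -> s`_i <= U`_i.
  apply: IH; first by rewrite size_rem // -hs.
  move=> t; have := H t; rewrite cV /=.
  have [ut|tu] := leP u t.
    by rewrite (le_trans vu ut) /=; lia.
  case: (leP v t) => vt /=; last by lia.
  have E : count (fun z : R => (z <= t)%R) V = count (fun z : R => (z <= u)%R) V.
    apply: eq_in_count => w wV /=; apply/idP/idP => [wt|wu].
      exact: le_trans wt (ltW tu).
    exact: le_trans (vmax w wV wu) vt.
  move: (H u); rewrite -E cV lexx vt /=.
  have := @count_sub R (fun z : R => (z <= t)%R) (fun z : R => (z <= u)%R) U.
  move=> h; have {}h := h (fun w _ wt => le_trans wt (ltW tu)); lia.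
exists (v :: s'); split.
  by rewrite perm_sym (perm_trans pV) // perm_cons perm_sym.
by case=> [|i] //= /Hs'.
Qed.

End Greedy.

Section Count.
Variable R : rcfType.
Variables (xs ys : seq R) (c : R).
Hypothesis hc : c != 0.
Hypothesis hp : (\prod_(y <- xs) ('X - y%:P))^`() = c *: \prod_(y <- ys) ('X - y%:P).

Let p := \prod_(y <- xs) ('X - y%:P).

Lemma p_neq0 : p != 0.
Proof. exact: monic_neq0 (monic_prod_XsubC _ _ _). Qed.

Lemma p'_neq0 : p^`() != 0.
Proof.
rewrite /p hp scaler_eq0 negb_or hc /=.
exact: monic_neq0 (monic_prod_XsubC _ _ _).
Qed.

Lemma rolle_y b a : b < a -> b \in xs -> a \in xs ->
  has (fun z : R => ((b < z) && (z < a))%R) ys.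
Proof.
move=> ba bx ax.
have pb : p.[b] = 0 by apply/eqP; rewrite -/(root p b) root_prod_XsubC.
have pa : p.[a] = 0 by apply/eqP; rewrite -/(root p a) root_prod_XsubC.
have [z zin pz] := poly_rolle ba (etrans pb (esym pa)).
apply/hasP; exists z; last by move: zin; rewrite in_itv.
rewrite -root_prod_XsubC; apply/eqP.
move: pz; rewrite /p hp hornerZ => /eqP; rewrite mulf_eq0 (negbTE hc) /=.
by move/eqP.
Qed.

Lemma mult_y a : (count_mem a xs <= (count_mem a ys).+1)%N.
Proof.
have E1 : mup a p = count_mem a xs by rewrite mu_prod_XsubC.
have E2 : mup a p^`() = count_mem a ys.
  rewrite /p hp -mul_polyC mupMr ?mu_prod_XsubC //.
  by rewrite rootC.
rewrite -E1 -E2.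
case E: (mup a p) => [|k] //.
have : ('X - a%:P) ^+ k.+1 %| p by rewrite -mup_geq ?p_neq0 // E.
case/dvdpP => q hq.
suff : (k <= mup a p^`())%N by [].
rewrite mup_geq ?p'_neq0 // hq derivM deriv_exp /=.
rewrite exprS.
apply: dvdp_add; apply: dvdp_mull; first exact: dvdp_mulIr.
by rewrite -mulrnAr; apply: dvdp_mull; rewrite -mulr_natr dvdp_mulIl.
Qed.

Lemma count_le_t : forall t, (count (fun z : R => (z <= t)%R) xs <=
                              (count (fun z : R => (z <= t)%R) ys).+1)%N.
Proof.
suff H : forall N t, (count (fun z : R => (z <= t)%R) xs <= N)%N ->
   (count (fun z : R => (z <= t)%R) xs <= (count (fun z : R => (z <= t)%R) ys).+1)%N.
  by move=> t; apply: (H _ t).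
elim=> [|N IH] t Ht; first by lia.
case hx: (has (fun z : R => (z <= t)%R) xs); last first.
  by move: hx; rewrite has_count; lia.
have [a [ax at_ amax]] := @max_filter R _ _ hx.
have Ex : count (fun z : R => (z <= t)%R) xs = count (fun z : R => (z <= a)%R) xs.
  apply: eq_in_count => w wx /=; apply/idP/idP => [wt|wa].
    exact: amax.
  exact: le_trans wa at_.
have Ey : (count (fun z : R => (z <= a)%R) ys <= count (fun z : R => (z <= t)%R) ys)%N.
  apply: count_sub => w _ /= wa; exact: le_trans wa at_.
suff : (count (fun z : R => (z <= a)%R) xs <= (count (fun z : R => (z <= a)%R) ys).+1)%N.
  by rewrite Ex; lia.
have ma := mult_y a.
have Cya : (count (pred1 a) ys <= count (fun z : R => (z <= a)%R) ys)%N.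
  by apply: count_sub => w _ /= /eqP ->.
case hb: (has (fun z : R => (z < a)%R) xs); last first.
  have : count (fun z : R => (z <= a)%R) xs = count (pred1 a) xs.
    apply: eq_in_count => w wx /=; rewrite le_eqVlt.
    case: (ltP w a) => wa; last by rewrite orbF.
    by move/hasPn: (negbT hb) => /(_ w wx); rewrite /= wa.
  lia.
have [b [bx ba bmax]] := @max_filter R _ _ hb.
have ca : (0 < count (pred1 a) xs)%N by rewrite -has_count has_pred1.
have Cx : count (fun z : R => (z <= a)%R) xs =
   (count (fun z : R => (z <= b)%R) xs + count (pred1 a) xs)%N.
  apply: count_eq2 => w wx /=.
  case: (ltgtP w a) => wa.
  - by rewrite (bmax w wx wa).
  - by rewrite leNgt (lt_trans ba wa).
  - by rewrite wa leNgt ba.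
have Cy : (count (fun z : R => (z <= b)%R) ys + count (fun z : R => ((b < z) && (z < a))%R) ys
      + count (pred1 a) ys <= count (fun z : R => (z <= a)%R) ys)%N.
  apply: count_le3 => w wy /=.
  case: (ltgtP w a) => wa.
  - by rewrite andbT; case: leP.
  - by rewrite leNgt (lt_trans ba wa) andbF.
  - by rewrite wa leNgt ba ?ltxx ?andbF.
have Ry : (0 < count (fun z : R => ((b < z) && (z < a))%R) ys)%N.
  by rewrite -has_count; apply: rolle_y.
have := IH b.
lia.
Qed.

End Count.

Section Vieta.
Variable R : rcfType.

Lemma vieta1 (s : seq R) : (\prod_(y <- s) ('X - y%:P))`_(size s) = 1.
Proof.
have := monic_prod_XsubC s xpredT id; rewrite monicE /lead_coef size_prod_XsubC.
by move/eqP.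
Qed.

Lemma vieta2 (s : seq R) : ('X * \prod_(y <- s) ('X - y%:P))`_(size s) = - \sum_(y <- s) y.
Proof.
elim: s => [|a s IH]; first by rewrite big_nil mulr1 coefX big_nil oppr0.
rewrite !big_cons /= mulrCA mulrBl coefB coefXM /= IH coefCM.
rewrite coefXM /= vieta1; ring.
Qed.

End Vieta.

Theorem mainTheorem12 (R : rcfType) (n : nat) (x : 'I_n -> R) (ys : seq R) :
  (0 < n)%N ->
  (forall i, 0 <= x i) ->
  zeros_multiset (\prod_(i < n) ('X - (x i)%:P))^`() ys ->
  d1 [seq x i | i <- enum 'I_n] (0 :: ys) = n%:R^-1 * \sum_(i < n) x i.
Proof.
case: n x => // m x _ hx [hnz hP].
set xs := [seq x i | i <- enum 'I_m.+1].
have Hprod : \prod_(i < m.+1) ('X - (x i)%:P) = \prod_(y <- xs) ('X - y%:P).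
  by rewrite big_map big_enum.
have Hsum : \sum_(i < m.+1) x i = \sum_(y <- xs) y.
  by rewrite big_map big_enum.
have sx : size xs = m.+1 by rewrite size_map size_enum_ord.
move: hnz hP; rewrite Hprod Hsum.
set p := \prod_(y <- xs) ('X - y%:P).
set c := lead_coef p^`() => hnz hp.
have hc : c != 0 by rewrite lead_coef_eq0.
have sp : size p = m.+2 by rewrite size_prod_XsubC sx.
have sys : size ys = m.
  have := polyorder.size_deriv p; rewrite sp /= hp size_scale //.
  by rewrite size_prod_XsubC => -[].
have Ec : c = m.+1%:R.
  have := coef_deriv p m; rewrite hp coefZ -sys vieta1 mulr1 => ->.
  by rewrite sys -sx vieta1 sx.
have Ev : m.+1%:R * \sum_(y <- ys) y = m%:R * \sum_(y <- xs) y.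
  have e1 : ('X * p^`())`_m = - (m.+1%:R * \sum_(y <- ys) y).
    by rewrite hp -scalerAr coefZ -sys vieta2 Ec mulrN sys.
  have e2 : ('X * p^`())`_m = - (m%:R * \sum_(y <- xs) y).
    rewrite coefXM; case Em: m => [|k] /=; first by rewrite mul0r oppr0.
    rewrite coef_deriv.
    have := @vieta2 R xs; rewrite sx coefXM /= Em => ->.
    by rewrite mulr_natl mulNrn.
  by apply: oppr_inj; rewrite -e1 -e2.
have nz : m.+1%:R != 0 :> R by rewrite pnatr_eq0.
set V := 0 :: ys.
have sUV : size xs = size V by rewrite /= sys sx.
have EL : \sum_(y <- xs) y - \sum_(y <- V) y = m.+1%:R^-1 * \sum_(y <- xs) y.
  rewrite big_cons add0r -[\sum_(y <- ys) y](mulKf nz) Ev.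
  move: nz; rewrite -addn1 natrD => nz; field.
  by [].
rewrite -EL.
have cost_ge s : perm_eq s V ->
    \sum_(y <- xs) y - \sum_(y <- V) y <= match_cost xs s.
  move=> ps; rewrite /match_cost.
  have ss : size s = size xs by rewrite (perm_size ps) sUV.
  apply: (@le_trans _ _ (\sum_(i < size xs) (xs`_i - s`_i))); last first.
    by apply: ler_sum => i _; exact: ler_norm.
  have h : \sum_(i < size xs) s`_i = \sum_(y <- s) y by rewrite -ss sum_nth.
  by rewrite sumrB h sum_nth (perm_big _ ps) lexx.
apply/eqP; rewrite eq_le; apply/andP; split; last first.
  rewrite /d1; apply: foldr_min_ge; first exact: cost_ge (perm_refl V).
  apply/allP => y /mapP[s hs ->]; apply: cost_ge; by rewrite -mem_permutations.
have [s [ps Hs]] : exists s, perm_eq s V /\ forall i, (i < size xs)%N -> s`_i <= xs`_i.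
  apply: greedy => // t.
  case: (leP 0 t) => t0.
    rewrite /V /= t0 /= add1n. exact: (@count_le_t R xs ys c hc hp t).
  have : ~~ has (fun z : R => (z <= t)%R) xs.
    apply/hasPn => w /mapP[i _ ->]; rewrite -ltNge; exact: lt_le_trans t0 (hx i).
  by rewrite has_count -leqNgt leqn0 => /eqP ->.
have Ec2 : match_cost xs s = \sum_(y <- xs) y - \sum_(y <- V) y.
  have ss : size s = size xs by rewrite (perm_size ps) sUV.
  rewrite /match_cost (eq_bigr (fun i : 'I_(size xs) => xs`_i - s`_i)); last first.
    by move=> i _; rewrite ger0_norm // subr_ge0 Hs.
  have h : \sum_(i < size xs) s`_i = \sum_(y <- s) y by rewrite -ss sum_nth.
  by rewrite sumrB h sum_nth (perm_big _ ps).
rewrite -Ec2 /d1; apply: foldr_min_le.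
by apply: map_f; rewrite mem_permutations.
Qed.
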